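(* Let $\mathcal H$ be a two-dimensional real Hilbert space, $k\ge 2$, and let $T\in\mathcal L_s(^k\mathcal H)$ have norm one and attain its norm at $(\mathbf{x}_1,\ldots,\mathbf{x}_k)$, where $\mathbf{x}_1,\ldots,\mathbf{x}_k$ are norm one vectors with $\operatorname{span}\{\mathbf{x}_1,\ldots,\mathbf{x}_k\}=\mathcal H$. Then $T$ is an exposed point of the unit ball of $\mathcal L_s(^k\mathcal H)$.
   Context: $\mathcal L_s(^k\mathcal H)$ is the Banach space of symmetric $k$-linear forms on $\mathcal H$ with norm $\|T\|=\sup\{|T(\mathbf{w}_1,\ldots,\mathbf{w}_k)|:\|\mathbf{w}_i\|\le1\}$. $T$ attains its norm at $(\mathbf{x}_1,\ldots,\mathbf{x}_k)$ if $|T(\mathbf{x}_1,\ldots,\mathbf{x}_k)|=\|T\|$. A point $T$ of the unit ball $B$ of a Banach space $X$ is exposed if there is a continuous linear functional $\varphi$ on $X$ with $\varphi(T)>\varphi(S)$ for all $S\in B\setminus\{T\}$ (equivalently, $\varphi$ attains its maximum over $B$ only at $T$). *)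

(* Defs.v *)
From HB Require Import structures.
From mathcomp Require Import all_boot all_order all_algebra all_fingroup.
From mathcomp Require Import all_classical all_reals.
Set Implicit Arguments. Unset Strict Implicit. Unset Printing Implicit Defensive.
Import Order.TTheory GRing.Theory Num.Theory.
Local Open Scope ring_scope.
Local Open Scope classical_set_scope.

(* The two-dimensional real Hilbert space H is modelled as 'rV[R]_2 with the
   Euclidean inner product <u,v> = (u *m v^T) 0 0. *)
Definition inner (R : realType) (u v : 'rV[R]_2) : R := (u *m v^T) 0 0.
Definition vnorm (R : realType) (v : 'rV[R]_2) : R := Num.sqrt (inner v v).

Definition kform (R : realType) (k : nat) := ('I_k -> 'rV[R]_2) -> R.

Definition upd (R : realType) (k : nat) (x : 'I_k -> 'rV[R]_2) (i : 'I_k)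
  (v : 'rV[R]_2) : 'I_k -> 'rV[R]_2 := fun j => if j == i then v else x j.

Definition multilinear (R : realType) (k : nat) (T : kform R k) : Prop :=
  forall (x : 'I_k -> 'rV[R]_2) (i : 'I_k) (a : R) (u v : 'rV[R]_2),
    T (upd x i (a *: u + v)) = a * T (upd x i u) + T (upd x i v).

Definition symmetric_form (R : realType) (k : nat) (T : kform R k) : Prop :=
  forall (s : 'S_k) (x : 'I_k -> 'rV[R]_2), T (fun i => x (s i)) = T x.

Definition Ls (R : realType) (k : nat) (T : kform R k) : Prop :=
  multilinear T /\ symmetric_form T.

Definition unit_tuples (R : realType) (k : nat) : set ('I_k -> 'rV[R]_2) :=
  [set x | forall i, vnorm (x i) <= 1].

Definition formnorm (R : realType) (k : nat) (T : kform R k) : R :=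
  sup [set `|T x| | x in @unit_tuples R k].

Definition attains_norm_at (R : realType) (k : nat) (T : kform R k)
  (x : 'I_k -> 'rV[R]_2) : Prop := `|T x| = formnorm T.

(* T is an exposed point of the unit ball B of L_s(^k H): there is a continuous
   (= bounded) linear functional phi on L_s(^k H) with phi T > phi S for all
   S in B \ {T}. *)
Definition exposed_point (R : realType) (k : nat) (T : kform R k) : Prop :=
  Ls T /\ formnorm T <= 1 /\
  exists phi : kform R k -> R,
    (forall (a b : R) (S S' : kform R k), Ls S -> Ls S' ->
        phi (fun x => a * S x + b * S' x) = a * phi S + b * phi S') /\
    (exists C : R, forall S : kform R k, Ls S -> `|phi S| <= C * formnorm S) /\
    (forall S : kform R k, Ls S -> formnorm S <= 1 -> S <> T -> phi S < phi T).

(* Main.v *)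
Set Warnings "-all".
Require Import Defs.
From HB Require Import structures.
From mathcomp Require Import all_boot all_order all_algebra all_fingroup.
From mathcomp Require Import all_classical all_reals.
From mathcomp Require Import ring lra.
Import Order.TTheory GRing.Theory Num.Theory.
Local Open Scope ring_scope.
Set Implicit Arguments. Unset Strict Implicit.

Section Aux.
Variable R : realType.
Implicit Types (u v : 'rV[R]_2).

Definition c0 (v : 'rV[R]_2) : R := v ord0 ord0.
Definition c1 (v : 'rV[R]_2) : R := v ord0 ord_max.
Definition V (a b : R) : 'rV[R]_2 := \row_(j < 2) (if j == ord0 then a else b).

Lemma c0V a b : c0 (V a b) = a. Proof. by rewrite /c0 /V mxE. Qed.
Lemma c1V a b : c1 (V a b) = b. Proof. by rewrite /c1 /V mxE. Qed.
Lemma Veta v : v = V (c0 v) (c1 v).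
Proof.
apply/rowP => j; rewrite /V mxE /c0 /c1 ord1.
case: j => [[|[|//]]] Hj /=.
  by congr (v _ _); apply/val_inj.
by congr (v _ _); apply/val_inj.
Qed.
Lemma innerE u v : inner u v = c0 u * c0 v + c1 u * c1 v.
Proof.
rewrite /inner mxE big_ord_recr big_ord1 /= !mxE /c0 /c1.
by congr (_ * _ + _ * _); congr (_ _ _); apply/val_inj.
Qed.
Lemma c0D u v : c0 (u + v) = c0 u + c0 v. Proof. by rewrite /c0 mxE. Qed.
Lemma c1D u v : c1 (u + v) = c1 u + c1 v. Proof. by rewrite /c1 mxE. Qed.
Lemma c0Z a v : c0 (a *: v) = a * c0 v. Proof. by rewrite /c0 mxE. Qed.
Lemma c1Z a v : c1 (a *: v) = a * c1 v. Proof. by rewrite /c1 mxE. Qed.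
Lemma V_eq u v : c0 u = c0 v -> c1 u = c1 v -> u = v.
Proof. by move=> h0 h1; rewrite (Veta u) (Veta v) h0 h1. Qed.

Lemma inner_ge0 v : 0 <= inner v v.
Proof. by rewrite innerE; nra. Qed.

Lemma vnorm_le1 v : (vnorm v <= 1) = (inner v v <= 1).
Proof. by rewrite /vnorm -{1}sqrtr1 ler_sqrt. Qed.

Lemma vnorm_eq1 v : vnorm v = 1 -> inner v v = 1.
Proof.
move=> h; have := sqr_sqrtr (inner_ge0 v); rewrite -/(vnorm v) h.
by rewrite expr1n => <-.
Qed.

Lemma vnorm_eq1' v : inner v v = 1 -> vnorm v = 1.
Proof. by rewrite /vnorm => ->; rewrite sqrtr1. Qed.

Definition e1 := V 1 0.
Definition e2 := V 0 1.
Definition det (u v : 'rV[R]_2) := c0 u * c1 v - c1 u * c0 v.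
Definition cm (a b : 'rV[R]_2) := V (c0 a * c0 b - c1 a * c1 b) (c0 a * c1 b + c1 a * c0 b).
Definition cc (a : 'rV[R]_2) := V (c0 a) (- c1 a).
Definition sig a b u := cm (cm a b) (cc u).
Definition n2 (a : 'rV[R]_2) := c0 a ^+ 2 + c1 a ^+ 2.

Lemma innerN2 a : inner a a = n2 a.
Proof. by rewrite innerE /n2 !expr2. Qed.

Lemma n2cm a b : n2 (cm a b) = n2 a * n2 b.
Proof. by rewrite /n2 /cm c0V c1V; ring. Qed.
Lemma n2cc a : n2 (cc a) = n2 a.
Proof. by rewrite /n2 /cc c0V c1V; ring. Qed.

Lemma key1 (y0 y1 w0 w1 : R) : y0^+2 + y1^+2 = 1 -> y0 * w0 + y1 * w1 = 1 ->
  (forall a b : R, a^+2 + b^+2 <= 1 -> a * w0 + b * w1 <= 1) -> w0 = y0 /\ w1 = y1.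
Proof.
move=> hy hw hb.
set d0 := w0 - y0; set d1 := w1 - y1.
set D := d0 ^+ 2 + d1 ^+ 2.
have D0 : 0 <= D by rewrite /D; nra.
have hyd : y0 * d0 + y1 * d1 = 0 by rewrite /d0 /d1; nra.
have pos : 0 < 1 + D / 4 by lra.
set c := (1 + D / 4)^-1.
have hc : c * (1 + D / 4) = 1 by rewrite mulVf // gt_eqF.
have c0' : 0 < c by rewrite invr_gt0.
have := hb (c * (y0 + d0 / 2)) (c * (y1 + d1 / 2)).
have e1' : (c * (y0 + d0 / 2)) ^+ 2 + (c * (y1 + d1 / 2)) ^+ 2 = c * (c * (1 + D / 4)).
  rewrite /D; nra.
have e2' : c * (y0 + d0 / 2) * w0 + c * (y1 + d1 / 2) * w1 = c * (1 + D / 2).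
  rewrite /D /d0 /d1 in hyd *; nra.
rewrite e1' e2' hc mulr1.
have cle : c <= 1 by nra.
move=> /(_ cle) h.
have : c * (1 + D / 2) <= c * (1 + D / 4) by rewrite hc.
rewrite ler_pM2l // => hD.
have D00 : D = 0 by lra.
have : d0 = 0 /\ d1 = 0 by move: D00; rewrite /D; split; nra.
by rewrite /d0 /d1 => -[/eqP]; rewrite subr_eq0 => /eqP -> /eqP; rewrite subr_eq0 => /eqP ->.
Qed.
Lemma c0e1 : c0 e1 = 1. Proof. exact: c0V. Qed.
Lemma c1e1 : c1 e1 = 0. Proof. exact: c1V. Qed.
Lemma c0e2 : c0 e2 = 0. Proof. exact: c0V. Qed.
Lemma c1e2 : c1 e2 = 1. Proof. exact: c1V. Qed.
Lemma decomp u : u = c0 u *: e1 + c1 u *: e2.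
Proof. by apply: V_eq; rewrite ?c0D ?c1D ?c0Z ?c1Z ?c0e1 ?c1e1 ?c0e2 ?c1e2; ring. Qed.

Variable k : nat.
Implicit Types (S : kform R k) (y z : 'I_k -> 'rV[R]_2) (i j l : 'I_k).

Lemma upd_same y i : upd y i (y i) = y.
Proof. by apply: funext => m; rewrite /upd; case: eqP => // ->. Qed.
Lemma upd_upd y i u v : upd (upd y i u) i v = upd y i v.
Proof. by apply: funext => m; rewrite /upd; case: eqP. Qed.
Lemma upd_C y i j u v : i != j -> upd (upd y i u) j v = upd (upd y j v) i u.
Proof.
move=> ij; apply: funext => m; rewrite /upd; case: eqP => [mj|]; case: eqP => // mi; subst.
by rewrite eqxx in ij.
Qed.
Lemma upd_at y i u : upd y i u i = u.
Proof. by rewrite /upd eqxx. Qed.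
Lemma upd_ne y i j u : j != i -> upd y i u j = y j.
Proof. by rewrite /upd => /negbTE ->. Qed.

Lemma S0 S y i : multilinear S -> S (upd y i 0) = 0.
Proof.
move=> ml; have := ml y i 1 0 0; rewrite scaler0 addr0 mul1r => h.
by move: h; lra.
Qed.
Lemma SZ S y i a u : multilinear S -> S (upd y i (a *: u)) = a * S (upd y i u).
Proof. by move=> ml; have := ml y i a u 0; rewrite addr0 S0 // addr0. Qed.
Lemma Sexp S y i u : multilinear S ->
  S (upd y i u) = c0 u * S (upd y i e1) + c1 u * S (upd y i e2).
Proof. by move=> ml; rewrite {1}(decomp u) ml SZ. Qed.
Lemma Sswap S y i j u v : Defs.symmetric_form S -> i != j ->
  S (upd (upd y i u) j v) = S (upd (upd y i v) j u).
Proof.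
move=> sy ij; have hs := sy (tperm i j) (upd (upd y i v) j u); rewrite -hs; congr S; apply: funext => m.
move/eqP: ij => ij.
rewrite /upd; case: (tpermP i j m) => [->|->|h1 h2]; repeat case: eqP => //; congruence.
Qed.

Definition Bnd S := forall z, (forall l, inner (z l) (z l) <= 1) -> `|S z| <= 1.
Definition Unit y := forall l, n2 (y l) = 1.

Lemma step1 S y i v : multilinear S -> Bnd S -> Unit y -> S y = 1 ->
  S (upd y i v) = inner v (y i).
Proof.
move=> ml bd un Sy.
rewrite Sexp // innerE.
have := un i; rewrite /n2 => ny.
have h1 : c0 (y i) * S (upd y i e1) + c1 (y i) * S (upd y i e2) = 1.
  by rewrite -Sexp // upd_same.
suff hb : forall a b : R, a^+2 + b^+2 <= 1 ->
    a * S (upd y i e1) + b * S (upd y i e2) <= 1.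
  by have [-> ->] := @key1 _ _ _ _ ny h1 hb.
move=> a b hab.
have := bd (upd y i (V a b)).
rewrite Sexp // c0V c1V => h; apply: le_trans (ler_norm _) (h _) => l.
rewrite innerN2; case: (eqVneq l i) => [->|li].
  by rewrite upd_at /n2 c0V c1V.
by rewrite upd_ne // un.
Qed.
Lemma upd_idem y i w : y i = w -> upd y i w = y.
Proof. by move=> <-; exact: upd_same. Qed.

Lemma alg2 (a0 a1 b0 b1 E1 E2 u0 u1 v0 v1 : R) :
  a0^+2 + a1^+2 = 1 -> b0^+2 + b1^+2 = 1 -> a0 * b1 - a1 * b0 != 0 ->
  a0 * E1 + a1 * E2 = v0 * b0 + v1 * b1 ->
  b0 * E1 + b1 * E2 = v0 * a0 + v1 * a1 ->
  u0 * E1 + u1 * E2 = v0 * ((a0*b0 - a1*b1) * u0 + (a0*b1 + a1*b0) * u1)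
                    + v1 * ((a0*b1 + a1*b0) * u0 - (a0*b0 - a1*b1) * u1).
Proof.
move=> na nb dz hA hB.
set d := a0 * b1 - a1 * b0.
have hE1 : d * E1 = b1 * (v0 * b0 + v1 * b1) - a1 * (v0 * a0 + v1 * a1).
  by rewrite -hA -hB /d; ring.
have hE2 : d * E2 = a0 * (v0 * a0 + v1 * a1) - b0 * (v0 * b0 + v1 * b1).
  by rewrite -hA -hB /d; ring.
apply: (mulfI dz).
have -> : d * (u0 * E1 + u1 * E2) = u0 * (d * E1) + u1 * (d * E2) by ring.
rewrite hE1 hE2.
have na' : a0^+2 + a1^+2 - 1 = 0 by rewrite na subrr.
have nb' : b0^+2 + b1^+2 - 1 = 0 by rewrite nb subrr.
apply/eqP; rewrite -subr_eq0; apply/eqP.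
have -> : u0 * (b1 * (v0 * b0 + v1 * b1) - a1 * (v0 * a0 + v1 * a1)) +
  u1 * (a0 * (v0 * a0 + v1 * a1) - b0 * (v0 * b0 + v1 * b1)) -
  d * (v0 * ((a0 * b0 - a1 * b1) * u0 + (a0 * b1 + a1 * b0) * u1) +
       v1 * ((a0 * b1 + a1 * b0) * u0 - (a0 * b0 - a1 * b1) * u1)) =
  - ((a0^+2 + a1^+2 - 1) * (v0*u0*b0*b1 - v0*u1*b0^+2 + v1*u0*b1^+2 - v1*u1*b0*b1)
   + (b0^+2 + b1^+2 - 1) * (- v0*u0*a0*a1 + v0*u1*a0^+2 - v1*u0*a1^+2 + v1*u1*a0*a1)).
  by rewrite /d; ring.
by rewrite na' nb' !mul0r addr0 oppr0.
Qed.

Lemma step2 S y i j u v : multilinear S -> Defs.symmetric_form S -> Bnd S ->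
  Unit y -> S y = 1 -> i != j -> det (y i) (y j) != 0 ->
  S (upd (upd y i u) j v) = inner v (sig (y i) (y j) u).
Proof.
move=> ml sy bd un Sy ij dz.
rewrite upd_C // Sexp //.
have hA : S (upd (upd y j v) i (y i)) = inner v (y j).
  by rewrite upd_idem ?upd_ne // 1?eq_sym //; apply: step1.
have hB : S (upd (upd y j v) i (y j)) = inner v (y i).
  rewrite -upd_C // Sswap // upd_idem ?upd_ne //; last by rewrite eq_sym.
  exact: step1.
rewrite Sexp // innerE in hA; rewrite Sexp // innerE in hB.
have na := un i; have nb := un j; rewrite /n2 in na nb.
rewrite (@alg2 _ _ _ _ _ _ _ _ _ _ na nb dz hA hB) innerE /sig /cm /cc !c0V !c1V; ring.
Qed.
Lemma n2sig a b u : n2 (sig a b u) = n2 a * n2 b * n2 u.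
Proof. by rewrite /sig !n2cm n2cc. Qed.

Lemma move_good S y i j u : multilinear S -> Defs.symmetric_form S -> Bnd S ->
  Unit y -> S y = 1 -> i != j -> det (y i) (y j) != 0 -> n2 u = 1 ->
  Unit (upd (upd y i u) j (sig (y i) (y j) u)) /\
  S (upd (upd y i u) j (sig (y i) (y j) u)) = 1.
Proof.
move=> ml sy bd un Sy ij dz nu; split.
  move=> m; case: (eqVneq m j) => [->|mj]; first by rewrite upd_at n2sig !un nu !mul1r.
  rewrite upd_ne //; case: (eqVneq m i) => [->|mi]; first by rewrite upd_at.
  by rewrite upd_ne.
by rewrite step2 // innerN2 n2sig !un nu !mul1r.
Qed.

Lemma choose_mu yl b yp yq : n2 yl = 1 -> n2 b = 1 -> n2 yp = 1 -> n2 yq = 1 ->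
  exists mu, n2 mu = 1 /\ c1 mu != 0 /\
    det (sig yl (cm mu yl) b) (sig yp yq (cm mu yl)) != 0.
Proof.
move=> nl nb np nq.
set W := cm (cm (cm (cc yl) (cc yl)) (cc yl)) (cm b (cm yp yq)).
have nW : n2 W = 1 by rewrite /W !n2cm !n2cc nl nb np nq !mul1r.
have hd mu : det (sig yl (cm mu yl) b) (sig yp yq (cm mu yl)) =
   c0 W * (- (2 * c0 mu * c1 mu)) + c1 W * (c0 mu ^+ 2 - c1 mu ^+ 2).
  by rewrite /det /W /sig /cm /cc !c0V !c1V; ring.
clearbody W.
case: (eqVneq (c1 W) 0) => W1.
  exists (V (3/5) (4/5)); split; first by rewrite /n2 c0V c1V; field.
  split; first by rewrite c1V; apply/eqP; lra.
  rewrite hd !c0V !c1V W1.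
  have W0 : c0 W ^+ 2 = 1 by move: nW; rewrite /n2 W1 expr0n addr0.
  apply/eqP => h.
  have : c0 W = 0 by move: h; nra.
  by move=> h0; move: W0; rewrite h0 expr0n => /eqP; rewrite eq_sym oner_eq0.
exists (V 0 1); split; first by rewrite /n2 c0V c1V; ring.
split; first by rewrite c1V oner_eq0.
rewrite hd !c0V !c1V.
apply/eqP => h; move/eqP: W1; apply; move: h; nra.
Qed.

Lemma det_cm mu a : det a (cm mu a) = c1 mu * n2 a.
Proof. by rewrite /det /cm /n2 !c0V !c1V; ring. Qed.

Definition Good S S' y := Unit y /\ S y = 1 /\ S' y = 1.

Lemma reach S S' y p q l b :
  multilinear S -> Defs.symmetric_form S -> Bnd S ->
  multilinear S' -> Defs.symmetric_form S' -> Bnd S' ->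
  Good S S' y -> p != q -> l != p -> l != q -> det (y p) (y q) != 0 -> n2 b = 1 ->
  exists y', Good S S' y' /\ det (y' p) (y' q) != 0 /\ y' l = b /\
    forall m, m != l -> m != p -> m != q -> y' m = y m.
Proof.
move=> ml sy bd ml' sy' bd' [un [Sy S'y]] pq lp lq dz nb.
have [mu [nmu [m1 dmu]]] := choose_mu (un l) nb (un p) (un q).
set rho := cm mu (y l).
have nrho : n2 rho = 1 by rewrite /rho n2cm nmu un mul1r.
set y1 := upd (upd y p rho) q (sig (y p) (y q) rho).
have [u1 S1] := move_good ml sy bd un Sy pq dz nrho.
have [_ S'1] := move_good ml' sy' bd' un S'y pq dz nrho.
have y1l : y1 l = y l by rewrite /y1 !upd_ne.
have y1p : y1 p = rho by rewrite /y1 upd_ne // upd_at.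
have y1q : y1 q = sig (y p) (y q) rho by rewrite /y1 upd_at.
have dz1 : det (y1 l) (y1 p) != 0.
  by rewrite y1l y1p /rho det_cm un mulr1.
have [u2 S2] := move_good ml sy bd u1 S1 lp dz1 nb.
have [_ S'2] := move_good ml' sy' bd' u1 S'1 lp dz1 nb.
exists (upd (upd y1 l b) p (sig (y1 l) (y1 p) b)); split; first by [].
split.
  rewrite upd_at upd_ne 1?eq_sym // upd_ne 1?eq_sym // y1l y1p y1q.
  exact: dmu.
split; first by rewrite upd_ne // upd_at.
move=> m ml0 mp mq; rewrite upd_ne // upd_ne // /y1 upd_ne // upd_ne //.
Qed.
Lemma lt_of_ne n (nk : (n < k)%N) (m : 'I_k) : (n <= m)%N -> m != Ordinal nk -> (n < m)%N.
Proof.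
move=> nm ml; rewrite ltn_neqAle nm andbT; apply: contra ml => /eqP e.
by apply/eqP/val_inj; rewrite /= e.
Qed.

Lemma indL S S' p q :
  multilinear S -> Defs.symmetric_form S -> Bnd S ->
  multilinear S' -> Defs.symmetric_form S' -> Bnd S' -> p != q -> forall n,
  forall y, Good S S' y -> det (y p) (y q) != 0 -> forall z,
  (forall m : 'I_k, (n <= m)%N -> m != p -> m != q -> z m = y m) -> S z = S' z.
Proof.
move=> ml sy bd ml' sy' bd' pq; elim.
  move=> y [un [Sy S'y]] dz z hz.
  have ez : z = upd (upd y p (z p)) q (z q).
    apply: funext => m; rewrite /upd; case: eqP => [->|/eqP mq] //.
    case: eqP => [->|/eqP mp] //; exact: hz.
  by rewrite ez !step2.
move=> n IH y Gy dz z hz.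
case: (ltnP n k) => [nk|kn]; last first.
  apply: (IH y Gy dz z) => m nm; have := ltn_ord m.
  by rewrite ltnNge (leq_trans kn nm).
set l := Ordinal nk.
case: (eqVneq l p) => [lp|lp].
  apply: (IH y Gy dz z) => m nm mp mq; apply: hz => //; apply: (@lt_of_ne _ nk) => //.
  by rewrite -/l lp.
case: (eqVneq l q) => [lq|lq].
  apply: (IH y Gy dz z) => m nm mp mq; apply: hz => //; apply: (@lt_of_ne _ nk) => //.
  by rewrite -/l lq.
have ez := upd_same z l; rewrite -ez Sexp // [RHS]Sexp //.
suff hb : forall b, n2 b = 1 -> S (upd z l b) = S' (upd z l b).
  by rewrite !hb // /n2 ?c0e1 ?c1e1 ?c0e2 ?c1e2; ring.
move=> b nb.
have [y' [Gy' [dz' [y'l y'o]]]] := reach ml sy bd ml' sy' bd' Gy pq lp lq dz nb.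
apply: (IH y' Gy' dz') => m nm mp mq.
case: (eqVneq m l) => [->|ml0]; first by rewrite upd_at y'l.
rewrite upd_ne // y'o // hz //; exact: (@lt_of_ne _ nk).
Qed.

Lemma core S S' x p q :
  multilinear S -> Defs.symmetric_form S -> Bnd S ->
  multilinear S' -> Defs.symmetric_form S' -> Bnd S' ->
  Unit x -> S x = 1 -> S' x = 1 -> p != q -> det (x p) (x q) != 0 ->
  forall z, S z = S' z.
Proof.
move=> ml sy bd ml' sy' bd' un Sx S'x pq dz z.
apply: (indL ml sy bd ml' sy' bd' pq (n := k) (y := x)) => // m.
by rewrite leqNgt ltn_ord.
Qed.
Lemma abs_le1 (a b : R) : a ^+ 2 + b ^+ 2 <= 1 -> `|a| <= 1.
Proof. by move=> h; rewrite ler_norml; apply/andP; split; nra. Qed.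

Lemma tri_bound (a b X Y : R) : `|a| <= 1 -> `|b| <= 1 -> `|a * X + b * Y| <= `|X| + `|Y|.
Proof.
move=> ha hb; apply: le_trans (ler_normD _ _) _; rewrite !normrM.
apply: lerD; rewrite -[X in _ <= X]mul1r; apply: ler_wpM2r => //.
Qed.

Definition Kb S := \sum_(c : {ffun 'I_k -> bool}) `|S (fun l => if c l then e1 else e2)|.

Lemma bounded_aux S : multilinear S -> forall m z, (forall l, n2 (z l) <= 1) ->
  (forall l : 'I_k, (m <= l)%N -> z l = e1 \/ z l = e2) -> `|S z| <= Kb S * 2 ^+ m.
Proof.
move=> ml; elim.
  move=> z _ hz; rewrite expr0 mulr1.
  have -> : z = (fun l => if [ffun l => z l == e1] l then e1 else e2).
    apply: funext => l; rewrite ffunE; case: eqP => // /eqP ne.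
    by case: (hz l (leq0n _)) => // e; rewrite e eqxx in ne.
  rewrite /Kb (bigD1 [ffun l => z l == e1]) //= lerDl.
  by apply: sumr_ge0.
move=> m IH z hn hz.
have Kge : 0 <= Kb S by apply: sumr_ge0.
case: (ltnP m k) => [mk|km]; last first.
  apply: le_trans (IH z hn _) _.
    move=> l ml0; have := ltn_ord l; by rewrite ltnNge (leq_trans km ml0).
  by rewrite ler_wpM2l // exprS ler_peMl ?exprn_ge0 // ler1n.
set l := Ordinal mk.
have hb b : b = e1 \/ b = e2 -> `|S (upd z l b)| <= Kb S * 2 ^+ m.
  move=> hb; apply: IH.
    move=> j; case: (eqVneq j l) => [->|jl]; last by rewrite upd_ne.
    by rewrite upd_at; case: hb => ->; rewrite /n2 ?c0e1 ?c1e1 ?c0e2 ?c1e2; lra.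
  move=> j mj; case: (eqVneq j l) => [->|jl]; first by rewrite upd_at.
  rewrite upd_ne //; apply: hz; exact: (@lt_of_ne _ mk).
have ez := upd_same z l; rewrite -ez Sexp //.
have := hn l; rewrite /n2 => hnl.
apply: le_trans (tri_bound _ _ (abs_le1 hnl) _) _.
  by apply: (@abs_le1 _ (c0 (z l))); rewrite addrC.
rewrite exprS mulrA [Kb S * 2]mulrC -mulrA mulr2n mulrDl !mul1r.
by apply: lerD; apply: hb; [left|right].
Qed.

Lemma bounded S : multilinear S -> forall z, (forall l, n2 (z l) <= 1) ->
  `|S z| <= Kb S * 2 ^+ k.
Proof.
move=> ml z hn; apply: bounded_aux => // l; have := ltn_ord l.
by rewrite ltnNge => /negP.
Qed.

Lemma le_formnorm S z : multilinear S -> (forall l, inner (z l) (z l) <= 1) ->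
  `|S z| <= formnorm S.
Proof.
move=> ml hz.
have hub : has_ubound [set `|S x| | x in @unit_tuples R k].
  exists (Kb S * 2 ^+ k) => r [x hx <-]; apply: bounded => // l.
  by rewrite -innerN2 -vnorm_le1; apply: hx.
apply: (ub_le_sup hub); exists z => //= l.
by rewrite vnorm_le1.
Qed.
Lemma lin_help (a0 a1 b0 b1 : R) : a0^+2 + a1^+2 = 1 -> a0 * b1 - a1 * b0 = 0 ->
  b0 = (b0 * a0 + b1 * a1) * a0 /\ b1 = (b0 * a0 + b1 * a1) * a1.
Proof.
move=> n d; split; apply/eqP; rewrite -subr_eq0; apply/eqP.
  have -> : b0 - (b0 * a0 + b1 * a1) * a0 =
    b0 * (1 - (a0^+2 + a1^+2)) - a1 * (a0 * b1 - a1 * b0) by ring.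
  by rewrite n d subrr; ring.
have -> : b1 - (b0 * a0 + b1 * a1) * a1 =
  b1 * (1 - (a0^+2 + a1^+2)) + a0 * (a0 * b1 - a1 * b0) by ring.
by rewrite n d subrr; ring.
Qed.

Lemma span_det (x : 'I_k -> 'rV[R]_2) : (0 < k)%N -> Unit x ->
  (<<[seq x i | i : 'I_k]>>%VS = fullv) -> exists p q, det (x p) (x q) != 0.
Proof.
move=> k0 un hs.
have [//|hn] := pselect (exists p q, det (x p) (x q) != 0).
exfalso.
set i0 := Ordinal k0; set x0 := x i0.
have n0 : n2 x0 = 1 by apply: un.
have sub : (<<[seq x i | i : 'I_k]>> <= <[x0]>)%VS.
  apply/span_subvP => v /mapP [i _ ->]; apply/vlineP.
  exists (inner (x i) x0).
  have d0 : det x0 (x i) = 0.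
    by apply/eqP; apply: contraT => h; exfalso; apply: hn; exists i0, i.
  move: d0 n0; rewrite /det /n2 innerE => d0 n0.
  have [h0 h1] := lin_help n0 d0.
  by apply: V_eq; rewrite ?c0Z ?c1Z.
have := memvf (V (- c1 x0) (c0 x0)); rewrite -hs => /(subvP sub) /vlineP [c hc].
have h0 := f_equal c0 hc; have h1 := f_equal c1 hc.
rewrite c0Z c0V in h0; rewrite c1Z c1V in h1.
move: n0; rewrite /n2 => n0.
have hz : c0 x0 ^+ 2 + c1 x0 ^+ 2 = c0 x0 * (c * c1 x0) + c1 x0 * (- (c * c0 x0)).
  by rewrite -h1 -h0 opprK; ring.
have : c0 x0 ^+ 2 + c1 x0 ^+ 2 = 0 by rewrite hz; ring.
by rewrite n0 => /eqP; rewrite oner_eq0.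
Qed.
End Aux.

Theorem proposition1p5 (R : realType) (k : nat) (T : kform R k)
  (x : 'I_k -> 'rV[R]_2) :
  (2 <= k)%N ->
  Ls T ->
  formnorm T = 1 ->
  (forall i, vnorm (x i) = 1) ->
  attains_norm_at T x ->
  (<<[seq x i | i : 'I_k]>>%VS = fullv) ->
  exposed_point T.
Proof.
move=> k2 [mlT syT] nT nx att hs.
have k0 : (0 < k)%N by apply: leq_trans k2.
have un : Unit x by move=> l; rewrite -innerN2; apply: vnorm_eq1.
have [p [q dz]] := span_det k0 un hs.
have pq : p != q by apply: contra dz => /eqP ->; rewrite /det mulrC subrr.
set eps := T x.
have ae : `|eps| = 1 by rewrite /eps att nT.
have e2 : eps * eps = 1 by rewrite -expr2 -real_normK ?num_real // ae expr1n.
have mlS (S : kform R k) : multilinear S -> multilinear (fun z => eps * S z).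
  by move=> ml z i a u v; rewrite ml; ring.
have syS (S : kform R k) : Defs.symmetric_form S -> Defs.symmetric_form (fun z => eps * S z).
  by move=> sy s z; rewrite sy.
have bdS (S : kform R k) : multilinear S -> formnorm S <= 1 -> Bnd (fun z => eps * S z).
  move=> ml nS z hz; rewrite normrM ae mul1r; apply: le_trans nS.
  by apply: le_formnorm.
split; first by [].
split; first by rewrite nT.
exists (fun S => eps * S x); split.
  by move=> a b S S' _ _; ring.
split.
  exists 1 => S [ml _]; rewrite normrM ae !mul1r.
  by apply: le_formnorm => // l; rewrite innerN2 un.
move=> S [ml sy] nS neq.
have hle : eps * S x <= 1.
  apply: le_trans (ler_norm _) _; rewrite normrM ae mul1r; apply: le_trans nS.
  by apply: le_formnorm => // l; rewrite innerN2 un.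
rewrite e2 lt_neqAle hle andbT; apply/eqP => h.
apply: neq; apply: funext => z.
have := core (mlS _ ml) (syS _ sy) (bdS _ ml nS) (mlS _ mlT) (syS _ syT)
  (bdS _ mlT ltac:(by rewrite nT)) un h e2 pq dz z.
move=> hz; by rewrite -[S z]mul1r -e2 -mulrA hz mulrA e2 mul1r.
Qed.
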